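(* Let $\eta,\lambda>0$ with $\eta\lambda\le\tfrac12$, $T\ge1$, $\delta\in(0,1)$, assume $\frac{\underline\sigma^2}{M^2}\ge3e^{4\eta\lambda}\sqrt{\lambda\eta\ln\frac{2T^2}{\delta}}$, and let $x(t)$ be the SGD+WD iterates from $x(0)\neq0$. On the event $\mathcal E_T$, for every $0\le t\le T$, $$\eta^{-2}\|x(t)\|_2^4\ge\frac{1-\eta\lambda}{2\eta\lambda}\big(1-e^{-4t\eta\lambda(1-\eta\lambda)}\big)\underline\sigma^2-\frac12(1-\eta\lambda)^2M^2e^{4\eta\lambda}\sqrt{\frac{1}{\lambda\eta}\ln\frac{2T^2}{\delta}}.$$ If in addition $\frac{\underline\sigma^2}{12\eta\lambda}\ge\frac{M^2}{2}e^{4\eta\lambda}\sqrt{\frac{1}{\lambda\eta}\ln\frac{2T^2}{\delta}}$, then on $\mathcal E_T$, for every $t$ with $\frac{1}{\eta\lambda}\le t\le T$, $$\eta^{-2}\|x(t)\|_2^4\ge\frac{(1-\eta\lambda)^2\underline\sigma^2}{4\eta\lambda}.$$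
   Context: Let $\Gamma$ be an index set with probability distribution $\mathcal D$; each $L_\gamma:\mathbb{R}^d\setminus\{0\}\to\mathbb{R}$ is differentiable and scale invariant ($L_\gamma(cx)=L_\gamma(x)$ for $c>0$); $M:=\sup_{\gamma}\max_{\|x\|_2=1}\|\nabla L_\gamma(x)\|_2<\infty$; $\underline\sigma>0$ satisfies $\underline\sigma^2\le\mathbb{E}_\gamma\|\nabla L_\gamma(x)\|_2^2$ for all $\|x\|_2=1$. SGD+WD: $x(t+1)=(1-\eta\lambda)x(t)-\eta\nabla L_{\gamma_t}(x(t))$ with $\gamma_t$ i.i.d. $\sim\mathcal D$; $\bar x:=x/\|x\|_2$. $\mathcal E_T$ is the event that for all $0\le t'\le t\le T-1$, $$\Big|\sum_{\tau=t'}^t(1-\eta\lambda)^{4(t-\tau)}\Big(\|\nabla L_{\gamma_\tau}(\bar x(\tau))\|_2^2-\mathbb{E}\big[\|\nabla L_{\gamma_\tau}(\bar x(\tau))\|_2^2\,\big|\,\bar x(\tau)\big]\Big)\Big|\le e^{4\eta\lambda}\frac{M^2}{4}\sqrt{\frac{1}{\lambda\eta}\ln\frac{2T^2}{\delta}}.$$ *)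

(* Defs.v *)
From HB Require Import structures.
From mathcomp Require Import all_boot all_order all_algebra.
From mathcomp Require Import all_classical all_reals all_analysis.
Set Implicit Arguments. Unset Strict Implicit. Unset Printing Implicit Defensive.
Import Order.TTheory GRing.Theory Num.Theory.
Import numFieldNormedType.Exports.
Local Open Scope ring_scope.
Local Open Scope classical_set_scope.

Section Defs.
Variables (R : realType) (d : nat).

Definition l2norm (x : 'rV[R]_d) : R := Num.sqrt (\sum_(i < d) x ord0 i ^+ 2).

Definition basis_vec (i : 'I_d) : 'rV[R]_d := delta_mx ord0 i.

Definition grad (f : 'rV[R]_d -> R) (x : 'rV[R]_d) : 'rV[R]_d :=
  \row_i ('D_(basis_vec i) f x).

Definition normalize (x : 'rV[R]_d) : 'rV[R]_d := (l2norm x)^-1 *: x.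

(* M := sup_gamma sup_{||x||_2 = 1} ||grad L_gamma (x)||_2 : the set whose sup is taken *)
Definition gradnorm_sphere {G : Type} (L : G -> 'rV[R]_d -> R) : set R :=
  [set r | exists g x, l2norm x = 1 /\ r = l2norm (grad (L g) x)].

Fixpoint sgd_wd {G : Type} (L : G -> 'rV[R]_d -> R) (eta lam : R)
    (gam : nat -> G) (x0 : 'rV[R]_d) (t : nat) : 'rV[R]_d :=
  match t with
  | O => x0
  | S t' => let xt := sgd_wd L eta lam gam x0 t' in
            (1 - eta * lam) *: xt - eta *: grad (L (gam t')) xt
  end.

End Defs.

(* Main.v *)
Require Import Defs.
From HB Require Import structures.
From mathcomp Require Import all_boot all_order all_algebra.
From mathcomp Require Import all_classical all_reals all_analysis.
From mathcomp Require Import ring lra measurable_realfun.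
Import Order.TTheory GRing.Theory Num.Theory.
Import numFieldNormedType.Exports.
Local Open Scope ring_scope.
Local Open Scope classical_set_scope.

Set Implicit Arguments. Unset Strict Implicit. Unset Printing Implicit Defensive.

Section Geo.
Variables (R : realType) (d : nat).
Implicit Types (x y : 'rV[R]_d).

Definition dotp x y : R := \sum_(i < d) x ord0 i * y ord0 i.

Lemma l2norm_ge0 x : 0 <= l2norm x.
Proof. exact: sqrtr_ge0. Qed.

Lemma l2norm_sq x : l2norm x ^+ 2 = dotp x x.
Proof.
rewrite /l2norm sqr_sqrtr; last by apply: sumr_ge0 => i _; exact: sqr_ge0.
by apply: eq_bigr => i _; rewrite expr2.
Qed.

Lemma l2normZ (c : R) x : l2norm (c *: x) = `|c| * l2norm x.
Proof.
rewrite /l2norm -sqrtr_sqr -sqrtrM ?sqr_ge0 // mulr_sumr; congr Num.sqrt.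
by apply: eq_bigr => i _; rewrite mxE exprMn.
Qed.

Lemma l2norm_gt0 x : x != 0 -> 0 < l2norm x.
Proof.
move=> x0; rewrite lt_neqAle l2norm_ge0 andbT; apply/negP => /eqP h.
move/negP: x0; apply; apply/eqP/rowP => i; rewrite mxE.
have : l2norm x ^+ 2 = 0 by rewrite -h expr0n.
rewrite l2norm_sq /dotp => /eqP; rewrite psumr_eq0; last by move=> j _; rewrite -expr2 sqr_ge0.
move/allP => /(_ i (mem_index_enum _)) /=; rewrite -expr2 sqrf_eq0 => /eqP.
by have -> : ord0 = 0 by [].
Qed.

Lemma dotpC x y : dotp x y = dotp y x.
Proof. by apply: eq_bigr => i _; rewrite mulrC. Qed.

Lemma l2norm_comb (a b : R) x y :
  l2norm (a *: x - b *: y) ^+ 2 =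
  a ^+ 2 * l2norm x ^+ 2 - 2 * a * b * dotp x y + b ^+ 2 * l2norm y ^+ 2.
Proof.
rewrite !l2norm_sq /dotp !mulr_sumr -sumrB -big_split /=.
by apply: eq_bigr => i _; rewrite !mxE; ring.
Qed.

Lemma normalize_norm x : x != 0 -> l2norm (normalize x) = 1.
Proof.
move=> x0; rewrite /normalize l2normZ ger0_norm ?invr_ge0 ?l2norm_ge0 //.
by rewrite mulVf // gt_eqF ?l2norm_gt0.
Qed.

Lemma normalize_neq0 x : x != 0 -> normalize x != 0.
Proof.
move=> x0; apply/negP => /eqP h; have := normalize_norm x0.
by rewrite h /l2norm big1 ?sqrtr0 => [/eqP|i _]; rewrite ?mxE ?expr0n // eq_sym oner_eq0.
Qed.

Lemma normalizeK x : x != 0 -> l2norm x *: normalize x = x.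
Proof.
by move=> x0; rewrite /normalize scalerA mulfV ?scale1r // gt_eqF ?l2norm_gt0.
Qed.
End Geo.

Section Der.
Variables (R : realType) (d : nat).
Implicit Types (x y : 'rV[R]_d).
Variable f : 'rV[R]_d -> R.
Hypothesis fsc : forall y (c : R), 0 < c -> f (c *: y) = f y.

Lemma derive_scale x (c : R) v : 0 < c ->
  'D_v f (c *: x) = 'D_(c^-1 *: v) f x.
Proof.
move=> c0; rewrite /derive.
suff -> : (fun h : R => h^-1 *: ((f \o shift (c *: x)) (h *: v) - f (c *: x))) =
  (fun h => h^-1 *: ((f \o shift x) (h *: (c^-1 *: v)) - f x)) by [].
apply/funext => h /=.
congr (_ *: (_ - _)); last by rewrite fsc.
transitivity (f (c *: (h *: (c^-1 *: v) + x))); last exact: fsc.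
congr f; rewrite /shift /= scalerDr !scalerA.
by rewrite mulrAC mulfV ?gt_eqF // mul1r.
Qed.

Lemma grad_scale x (c : R) : differentiable f x -> 0 < c ->
  grad f (c *: x) = c^-1 *: grad f x.
Proof.
move=> df c0; apply/rowP => i; rewrite !mxE derive_scale // !deriveE //.
by rewrite linearZ.
Qed.

Lemma derive_self0 x : 'D_x f x = 0.
Proof.
rewrite /derive; apply: cvg_lim => //; apply: cvg_near_cst.
near=> h => /=.
rewrite -{2}(scale1r x) -scalerDl fsc ?subrr ?scaler0 //.
near: h; exists 1 => //= h; rewrite /ball /= sub0r normrN => h1 _.
have : -1 < h by move: h1; rewrite ltr_norml => /andP[].
lra.
Unshelve. all: by end_near.
Qed.

Lemma grad_orth x : differentiable f x ->
  \sum_(i < d) x ord0 i * grad f x ord0 i = 0.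
Proof.
move=> df; transitivity ('D_x f x); last exact: derive_self0.
rewrite deriveE //.
have -> : 'd f x x = 'd f x (\sum_(j < d) x 0 j *: delta_mx 0 j) by rewrite -row_sum_delta.
rewrite linear_sum; apply: eq_bigr => i _.
by rewrite mxE linearZ /= deriveE.
Qed.
End Der.

Lemma fine_int_ge (R : realType) (dG : measure_display) (Gam : measurableType dG)
  (D : probability Gam R) (h : Gam -> R) (M s : R) :
  measurable_fun setT h -> (forall g, 0 <= h g <= M) ->
  (s%:E <= \int[D]_g (h g)%:E)%E -> s <= fine (\int[D]_g (h g)%:E).
Proof.
move=> mh hb hs.
have up : (\int[D]_g (h g)%:E <= M%:E)%E.
  apply: (@le_trans _ _ (\int[D]_g (cst M%:E g))%E).
    apply: ge0_le_integral => //.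
    - by move=> g _; rewrite lee_fin; case/andP: (hb g).
    - by apply/measurable_EFinP.
    - by move=> g _; rewrite lee_fin; case/andP: (hb g).
  rewrite integral_cst //; set m := (X in (_ * X)%E); have -> : m = 1%E by apply: probability_setT.
  by rewrite mule1.
move: hs up; case: (\int[D]_g (h g)%:E)%E => [r| |] //=.

Qed.

Section RealFacts.
Variable R : realType.

Lemma pow_exp_bound (a : R) (t : nat) : 0 < a -> a <= 2^-1 ->
  (1 - a) ^+ (4 * t) <= expR (- (4 * t%:R * a * (1 - a))).
Proof.
move=> a0 a1.
have h1 : 1 - a <= expR (- a) by exact: expR_ge1Dx.
apply: (@le_trans _ _ (expR (- a) ^+ (4 * t))).
  by apply: lerXn2r => //; rewrite nnegrE; [lra | exact: ltW (expR_gt0 _)].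
rewrite -expRM_natl ler_expR natrM.
have : 0 <= t%:R :> R by [].
nra.
Qed.

Lemma geom_bound (a S : R) (t : nat) : 0 < a -> a <= 2^-1 ->
  (1 - (1 - a) ^+ 4) * S = 1 - (1 - a) ^+ (4 * t) ->
  (1 - a) / (2 * a) * (1 - expR (- (4 * t%:R * a * (1 - a)))) <= 2 * (1 - a) ^+ 2 * S.
Proof.
move=> a0 a1 hS.
set E := expR _.
have hp := @pow_exp_bound a t a0 a1; rewrite -/E in hp.
set p := (1 - a) ^+ (4 * t) in hS hp.
have p1 : p <= 1 by apply: exprn_ile1; lra.
have q4 : (1 - a) ^+ 4 = 1 - 4 * a + 6 * a ^+ 2 - 4 * a ^+ 3 + a ^+ 4 by ring.
rewrite q4 in hS.
have hq1 : 0 < 4 * a - 6 * a ^+ 2 + 4 * a ^+ 3 - a ^+ 4 by nra.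
have hq2 : 4 * a - 6 * a ^+ 2 + 4 * a ^+ 3 - a ^+ 4 <= 4 * a * (1 - a) by nra.
have Sge : 0 <= S by nra.
have hS' : (4 * a - 6 * a ^+ 2 + 4 * a ^+ 3 - a ^+ 4) * S = 1 - p by rewrite -hS; ring.
have key : 1 - E <= 4 * a * (1 - a) * S by nra.
have -> : (1 - a) / (2 * a) * (1 - E) = ((1 - a) * (1 - E)) / (2 * a) by ring.
rewrite ler_pdivrMr; last lra.
have : 0 < 1 - a by lra.
nra.
Qed.

Lemma expRm2 : expR (-2) <= 4^-1 :> R.
Proof.
rewrite expRN lef_pV2 ?posrE ?expR_gt0 //.
have -> : (2 : R) = 2%:R * 1 by rewrite mulr1.
rewrite expRM_natl.
have h := expR_ge1Dx (1 : R).
have : 0 <= 1 + 1 :> R by [].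
nra.
Qed.

Lemma part2 (a s2 Z P : R) (t : nat) : 0 < a -> a <= 2^-1 -> 0 <= s2 ->
  1 <= t%:R * a -> Z <= s2 / (12 * a) ->
  (1 - a) / (2 * a) * (1 - expR (- (4 * t%:R * a * (1 - a)))) * s2 - (1 - a) ^+ 2 * Z <= P ->
  (1 - a) ^+ 2 * s2 / (4 * a) <= P.
Proof.
move=> a0 a1 s0 ta hZ hP.
set E := expR _ in hP.
have hE : E <= 4^-1.
  apply: le_trans expRm2; rewrite ler_expR.
  have : 0 <= t%:R :> R by [].
  nra.
apply: le_trans hP.
have hZ' : (1 - a) ^+ 2 * Z <= (1 - a) ^+ 2 * (s2 / (12 * a)).
  by apply: ler_wpM2l => //; exact: sqr_ge0.
have hA : (1 - a) / (2 * a) * (3 / 4) * s2 <= (1 - a) / (2 * a) * (1 - E) * s2.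
  apply: ler_wpM2r => //; apply: ler_wpM2l.
    apply: divr_ge0; lra.
  lra.
suff : (1 - a) ^+ 2 * s2 / (4 * a) + (1 - a) ^+ 2 * (s2 / (12 * a)) <=
       (1 - a) / (2 * a) * (3 / 4) * s2 by lra.
have -> : (1 - a) ^+ 2 * s2 / (4 * a) + (1 - a) ^+ 2 * (s2 / (12 * a)) =
   ((1 - a) ^+ 2 * s2 / 3) / a by field; lra.
have -> : (1 - a) / (2 * a) * (3 / 4) * s2 = ((1 - a) * s2 * 3 / 8) / a by field; lra.
apply: ler_wpM2r; first by rewrite invr_ge0; lra.
have h0 : 0 <= (1 - a) * s2 by apply: mulr_ge0 => //; lra.
have -> : (1 - a) ^+ 2 * s2 = (1 - a) * ((1 - a) * s2) by ring.
have : (1 - a) * ((1 - a) * s2) <= (1 - a) * s2 by apply: ler_piMl => //; lra.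
lra.
Qed.
End RealFacts.

Section Wsum.
Variable R : realType.
Definition Wsum (b : R) (f : nat -> R) (t : nat) :=
  \sum_(0 <= tau < t.+1) b ^+ (4 * (t - tau)) * f tau.

Lemma Wsum0 b f : Wsum b f 0 = f 0.
Proof. by rewrite /Wsum big_nat1 subnn muln0 expr0 mul1r. Qed.

Lemma Wsum_rec b f t : Wsum b f t.+1 = b ^+ 4 * Wsum b f t + f t.+1.
Proof.
rewrite /Wsum big_nat_recr //= subnn muln0 expr0 mul1r; congr (_ + _).
rewrite big_distrr /=; apply: eq_big_nat => i /andP[_ hi].
by rewrite subSn // mulnS exprD mulrA.
Qed.

Lemma Wsum_geom b t : (1 - b ^+ 4) * Wsum b (fun _ => 1) t = 1 - b ^+ (4 * t.+1).
Proof.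
elim: t => [|t IH]; first by rewrite Wsum0 mulr1 muln1.
rewrite Wsum_rec mulrDr mulrCA IH mulr1 (mulnS 4 t.+1) exprD; ring.
Qed.

Lemma Wsum_le b f g t : 0 <= b -> (forall i, f i <= g i) -> Wsum b f t <= Wsum b g t.
Proof.
move=> b0 fg; apply: ler_sum => i _; apply: ler_wpM2l => //; exact: exprn_ge0.
Qed.

Lemma WsumB b f g t : Wsum b (fun i => f i - g i) t = Wsum b f t - Wsum b g t.
Proof. by rewrite /Wsum -sumrB; apply: eq_bigr => i _; rewrite mulrBr. Qed.

Lemma WsumZ b c t : Wsum b (fun _ => c) t = c * Wsum b (fun _ => 1) t.
Proof. by rewrite /Wsum mulr_sumr; apply: eq_bigr => i _; rewrite mulr1 mulrC. Qed.
End Wsum.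

Theorem mainTheorem14 (R : realType) (d : nat)
  (dG : measure_display) (Gam : measurableType dG) (D : probability Gam R)
  (L : Gam -> 'rV[R]_d -> R)
  (L_diff : forall g x, x != 0 -> differentiable (L g) x)
  (L_scale : forall g x (c : R), x != 0 -> 0 < c -> L g (c *: x) = L g x)
  (L_meas : forall x, measurable_fun setT (fun g => l2norm (grad (L g) x) ^+ 2))
  (M_fin : has_ubound (gradnorm_sphere L))
  (sig : R) (sig_pos : 0 < sig)
  (sig_le : forall x, l2norm x = 1 ->
     ((sig ^+ 2)%:E <= \int[D]_g ((l2norm (grad (L g) x) ^+ 2)%:E))%E)
  (eta lam : R) (eta_pos : 0 < eta) (lam_pos : 0 < lam)
  (etalam_le : eta * lam <= 2^-1)
  (T : nat) (T_ge1 : (1 <= T)%N)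
  (delta : R) (delta_pos : 0 < delta) (delta_lt1 : delta < 1)
  (x0 : 'rV[R]_d) (x0_neq0 : x0 != 0)
  (gam : nat -> Gam) :
  let M := sup (gradnorm_sphere L) in
  let Ex := fun y : 'rV[R]_d => fine (\int[D]_g ((l2norm (grad (L g) y) ^+ 2)%:E)) in
  let x := sgd_wd L eta lam gam x0 in
  let lg := ln (2 * (T%:R) ^+ 2 / delta) in
  let ET := forall t' t : nat, (t' <= t)%N -> (t <= T.-1)%N ->
     `| \sum_(t' <= tau < t.+1)
          (1 - eta * lam) ^+ (4 * (t - tau)) *
          (l2norm (grad (L (gam tau)) (normalize (x tau))) ^+ 2 - Ex (normalize (x tau))) |
     <= expR (4 * eta * lam) * (M ^+ 2 / 4) * Num.sqrt ((lam * eta)^-1 * lg) in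
  sig ^+ 2 / M ^+ 2 >= 3 * expR (4 * eta * lam) * Num.sqrt (lam * eta * lg) ->
  ET ->
  (forall t : nat, (t <= T)%N ->
     eta ^- 2 * l2norm (x t) ^+ 4 >=
       (1 - eta * lam) / (2 * eta * lam)
         * (1 - expR (- (4 * t%:R * eta * lam * (1 - eta * lam)))) * sig ^+ 2
       - 2^-1 * (1 - eta * lam) ^+ 2 * M ^+ 2 * expR (4 * eta * lam)
           * Num.sqrt ((lam * eta)^-1 * lg))
  /\
  (sig ^+ 2 / (12 * eta * lam) >=
      M ^+ 2 / 2 * expR (4 * eta * lam) * Num.sqrt ((lam * eta)^-1 * lg) ->
   forall t : nat, (eta * lam)^-1 <= t%:R -> (t <= T)%N ->
     eta ^- 2 * l2norm (x t) ^+ 4 >= (1 - eta * lam) ^+ 2 * sig ^+ 2 / (4 * eta * lam)).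
Proof.
move=> M Ex x lg ETdef hyp ET.
have a0 : 0 < eta * lam by apply: mulr_gt0.
have a1 : eta * lam <= 2^-1 := etalam_le.
have Lsc : forall g y (c : R), 0 < c -> L g (c *: y) = L g y.
  move=> g y c c0; have [->|y0] := eqVneq y 0; first by rewrite scaler0.
  exact: L_scale.
have gradb : forall g y, l2norm y = 1 -> l2norm (grad (L g) y) <= M.
  move=> g y y1; apply: sup_upper_bound; last by exists g, y.
  by split => //; exists (l2norm (grad (L g) y)), g, y.
have Exge : forall y, l2norm y = 1 -> sig ^+ 2 <= Ex y.
  move=> y y1; apply: (@fine_int_ge _ _ _ D _ (M ^+ 2)); [exact: L_meas| |exact: sig_le].
  move=> g; rewrite sqr_ge0 /=; apply: lerXn2r; rewrite ?nnegrE ?l2norm_ge0 //.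
    by apply: (le_trans _ (gradb g y y1)); exact: l2norm_ge0.
  exact: gradb.
pose N t := l2norm (x t) ^+ 2.
pose G t := l2norm (grad (L (gam t)) (normalize (x t))) ^+ 2.
have step : forall t, x t != 0 ->
    N t.+1 = (1 - eta * lam) ^+ 2 * N t + eta ^+ 2 * (l2norm (x t))^-1 ^+ 2 * G t.
  move=> t xt0.
  have hn : 0 < l2norm (x t) := l2norm_gt0 xt0.
  have nxt : normalize (x t) != 0 := normalize_neq0 xt0.
  have gx : grad (L (gam t)) (x t) = (l2norm (x t))^-1 *: grad (L (gam t)) (normalize (x t)).
    by rewrite -{1}(normalizeK xt0) grad_scale //; [exact: Lsc | exact: L_diff].
  have xS : x t.+1 = (1 - eta * lam) *: x t - eta *: grad (L (gam t)) (x t) by [].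
  rewrite /N xS l2norm_comb /dotp grad_orth; [|exact: Lsc|exact: L_diff].
  rewrite gx l2normZ ger0_norm ?invr_ge0 ?l2norm_ge0 // exprMn.
  by rewrite /G; ring.
have Nge0 : forall t, 0 <= N t by move=> t; exact: sqr_ge0.
have Gge0 : forall t, 0 <= G t by move=> t; exact: sqr_ge0.
have ba : 0 < 1 - eta * lam by lra.
have nz : forall t, x t != 0.
  elim=> [//|t IH]; apply/negP => /eqP h0.
  have e := step t IH.
  have l0 : l2norm (0 : 'rV[R]_d) = 0.
    by rewrite /l2norm big1 ?sqrtr0 // => i _; rewrite mxE expr0n.
  rewrite /N h0 l0 expr0n /= in e.
  have : 0 < (1 - eta * lam) ^+ 2 * l2norm (x t) ^+ 2.
    by apply: mulr_gt0; apply: exprn_gt0 => //; exact: l2norm_gt0.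
  have : 0 <= eta ^+ 2 * (l2norm (x t))^-1 ^+ 2 * G t.
    by apply: mulr_ge0 => //; apply: mulr_ge0; exact: sqr_ge0.
  lra.
have Pstep : forall t, (1 - eta * lam) ^+ 4 * N t ^+ 2 + 2 * (1 - eta * lam) ^+ 2 * eta ^+ 2 * G t
    <= N t.+1 ^+ 2.
  move=> t; rewrite step //.
  have hn : l2norm (x t) != 0 by rewrite gt_eqF // l2norm_gt0.
  set A := (1 - eta * lam) ^+ 2 * N t.
  set B := eta ^+ 2 * (l2norm (x t))^-1 ^+ 2 * G t.
  have AB : A * B = (1 - eta * lam) ^+ 2 * eta ^+ 2 * G t.
    rewrite /A /B /N; field; exact: hn.
  have : 0 <= B ^+ 2 by exact: sqr_ge0.
  have -> : (1 - eta * lam) ^+ 4 * N t ^+ 2 = A ^+ 2 by rewrite /A; ring.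
  have -> : (A + B) ^+ 2 = A ^+ 2 + 2 * (A * B) + B ^+ 2 by ring.
  rewrite AB; lra.
have Pmain : forall t, 2 * (1 - eta * lam) ^+ 2 * eta ^+ 2 * Wsum (1 - eta * lam) G t <= N t.+1 ^+ 2.
  elim=> [|t IH].
    rewrite Wsum0; apply: le_trans (Pstep 0%N); rewrite lerDr.
    by apply: mulr_ge0; [apply: exprn_ge0; lra| exact: sqr_ge0].
  apply: le_trans (Pstep t.+1); rewrite Wsum_rec.
  have q0 : 0 <= (1 - eta * lam) ^+ 4 by apply: exprn_ge0; lra.
  have := ler_wpM2l q0 IH.
  set c := 2 * (1 - eta * lam) ^+ 2 * eta ^+ 2.
  move=> h; have -> : c * ((1 - eta * lam) ^+ 4 * Wsum (1 - eta * lam) G t + G t.+1) =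
     (1 - eta * lam) ^+ 4 * (c * Wsum (1 - eta * lam) G t) + c * G t.+1 by ring.
  lra.
pose B := expR (4 * eta * lam) * (M ^+ 2 / 4) * Num.sqrt ((lam * eta)^-1 * lg).
have B0 : 0 <= B.
  apply: mulr_ge0; [apply: mulr_ge0; [exact: ltW (expR_gt0 _)|] | exact: sqrtr_ge0].
  by apply: mulr_ge0 => //; exact: sqr_ge0.
have Gbound : forall s, (s <= T.-1)%N ->
    sig ^+ 2 * Wsum (1 - eta * lam) (fun _ => 1) s - B <= Wsum (1 - eta * lam) G s.
  move=> s hs; have h := ET 0%N s (leq0n s) hs.
  have h' : `|Wsum (1 - eta * lam) (fun tau => G tau - Ex (normalize (x tau))) s| <= B := h.
  rewrite WsumB ler_norml in h'; case/andP: h' => {}h _.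
  have : Wsum (1 - eta * lam) (fun _ => sig ^+ 2) s <= Wsum (1 - eta * lam) (fun tau => Ex (normalize (x tau))) s.
    apply: Wsum_le; first lra.
    by move=> i; apply: Exge; exact: normalize_norm.
  rewrite WsumZ; lra.
have part1 : forall t : nat, (t <= T)%N ->
     eta ^- 2 * l2norm (x t) ^+ 4 >=
       (1 - eta * lam) / (2 * eta * lam)
         * (1 - expR (- (4 * t%:R * eta * lam * (1 - eta * lam)))) * sig ^+ 2
       - 2^-1 * (1 - eta * lam) ^+ 2 * M ^+ 2 * expR (4 * eta * lam)
           * Num.sqrt ((lam * eta)^-1 * lg).
  move=> t ht.
  have l4 : l2norm (x t) ^+ 4 = N t ^+ 2 by rewrite /N -exprM.
  have K : 2^-1 * (1 - eta * lam) ^+ 2 * M ^+ 2 * expR (4 * eta * lam)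
           * Num.sqrt ((lam * eta)^-1 * lg) = 2 * (1 - eta * lam) ^+ 2 * B by rewrite /B; field.
  rewrite K l4.
  have e0 : forall u, 0 <= eta ^- 2 * N u ^+ 2.
    by move=> u; apply: mulr_ge0; [rewrite invr_ge0; exact: sqr_ge0 | exact: sqr_ge0].
  have K0 : 0 <= 2 * (1 - eta * lam) ^+ 2 * B.
    by apply: mulr_ge0 => //; apply: mulr_ge0 => //; exact: sqr_ge0.
  clear l4; case: t ht => [|s] ht.
    have -> : 4 * (0%:R : R) * eta * lam * (1 - eta * lam) = 0 by rewrite mulr0 !mul0r.
    rewrite oppr0 expR0 subrr mulr0 mul0r.
    have := e0 0%N; lra.
  have hs : (s <= T.-1)%N by case: (T) ht T_ge1.
  have gb := @geom_bound R (eta * lam) (Wsum (1 - eta * lam) (fun _ => 1) s) s.+1 a0 a1 (Wsum_geom _ s).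
  rewrite -(mulrA 2 eta lam) -(mulrA (4 * s.+1%:R) eta lam).
  have h1 : 2 * (1 - eta * lam) ^+ 2 * Wsum (1 - eta * lam) G s <= eta ^- 2 * N s.+1 ^+ 2.
    have e2 : 0 <= eta ^- 2 by rewrite invr_ge0; exact: sqr_ge0.
    apply: le_trans (ler_wpM2l e2 (Pmain s)).
    rewrite le_eqVlt; apply/orP; left; apply/eqP; field; by rewrite gt_eqF.
  have h2 := Gbound s hs.
  have h3 := ler_wpM2r (sqr_ge0 sig) gb.
  set S := Wsum (1 - eta * lam) (fun _ => 1) s in gb h2 h3.
  set W := Wsum (1 - eta * lam) G s in h1 h2.
  have : 0 <= 2 * (1 - eta * lam) ^+ 2 by apply: mulr_ge0 => //; exact: sqr_ge0.
  move=> c0; have h4 := ler_wpM2l c0 h2.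
  have E4 : 2 * (1 - eta * lam) ^+ 2 * (sig ^+ 2 * S - B) = 2 * (1 - eta * lam) ^+ 2 * S * sig ^+ 2 - 2 * (1 - eta * lam) ^+ 2 * B by ring.
  rewrite E4 in h4.
  lra.
split; first exact: part1.
move=> h2 t ht hT.
have p1 := part1 t hT.
rewrite -(mulrA 2 eta lam) -(mulrA (4 * t%:R) eta lam) in p1.
have E5 : 2^-1 * (1 - eta * lam) ^+ 2 * M ^+ 2 * expR (4 * eta * lam) * Num.sqrt ((lam * eta)^-1 * lg)
   = (1 - eta * lam) ^+ 2 * (M ^+ 2 / 2 * expR (4 * eta * lam) * Num.sqrt ((lam * eta)^-1 * lg)) by ring.
rewrite E5 in p1.
rewrite -(mulrA 12 eta lam) in h2.
rewrite -(mulrA 4 eta lam).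
apply: (part2 a0 a1 (sqr_ge0 sig) _ h2 p1).
by rewrite -(ler_pM2r a0) mulVf ?gt_eqF // in ht.

Qed.
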